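(* Let $G=(V,E)$ be a finite, connected, undirected graph with $n\ge2$ vertices and let $0<r<1$. Then the absorption time $\tau$ of the Moran process on $G$ with fitness $r$ (started from a single mutant at any vertex) satisfies $\mathbb{E}[\tau]\le\frac{1}{1-r}n^3$.
   Context: The Moran process on $G$ with mutant fitness $r>0$ is the Markov chain $(X_i)_{i\ge0}$ whose state $X_i\subseteq V$ is the set of vertices occupied by mutants; every other vertex is occupied by a non-mutant of fitness $1$. Write $W(S)=r|S|+|V\setminus S|$ for the total fitness. Given $X_i=S$, one step is: choose a vertex $x$ with probability $r/W(S)$ if $x\in S$ and $1/W(S)$ if $x\notin S$; then choose a neighbour $y$ of $x$ uniformly at random; set $X_{i+1}=S\cup\{y\}$ if $x\in S$ and $X_{i+1}=S\setminus\{y\}$ if $x\notin S$. The process starts from $X_0=\{x\}$ for a single vertex $x$. The absorption time is $\tau=\min\{i: X_i=\emptyset\text{ or }X_i=V\}$. *)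

(* Defs.v *)
From HB Require Import structures.
From mathcomp Require Import all_boot all_order all_algebra.
Set Implicit Arguments. Unset Strict Implicit. Unset Printing Implicit Defensive.
Import Order.TTheory GRing.Theory Num.Theory.
Local Open Scope ring_scope.

Section Moran.
Variables (R : realFieldType) (T : finType) (e : rel T) (r : R).

Definition deg (x : T) : nat := #|[set y | e x y]|.

Definition fitness (S : {set T}) (x : T) : R := if x \in S then r else 1.

Definition Wfit (S : {set T}) : R := r * (#|S|)%:R + (#|~: S|)%:R.

Definition moran_step (S S' : {set T}) : R :=
  \sum_(x : T) \sum_(y : T | e x y)
     (fitness S x / Wfit S) * ((deg x)%:R)^-1 *
     (S' == (if x \in S then y |: S else S :\ y))%:R.

Fixpoint moran_dist (x0 : T) (i : nat) : {set T} -> R :=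
  match i with
  | 0 => fun S => (S == [set x0])%:R
  | i'.+1 => fun S' => \sum_(S : {set T}) moran_dist x0 i' S * moran_step S S'
  end.

(* P(tau > i) = P(X_i is neither empty nor V); empty set and V are absorbing *)
Definition prob_tau_gt (x0 : T) (i : nat) : R :=
  \sum_(S : {set T} | (S != set0) && (S != setT)) moran_dist x0 i S.

End Moran.

(* Main.v *)
Require Import Defs.
From HB Require Import structures.
From mathcomp Require Import all_boot all_order all_algebra.
From mathcomp Require Import ring lra.
Import Order.TTheory GRing.Theory Num.Theory.
Local Open Scope ring_scope.

Section Proof5.
Variables (R : realFieldType) (T : finType) (e : rel T).
Hypotheses (e_sym : symmetric e) (e_irr : irreflexive e)
  (e_conn : forall x y : T, connect e x y) (hn : (2 <= #|T|)%N).
Variables (r : R).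
Hypotheses (hr0 : 0 < r) (hr1 : r < 1).

Lemma exists_other (x : T) : exists y, y != x.
Proof.
case: (pickP (fun y => y != x)) => [y hy|H0]; first by exists y.
have : (#|T| <= 1)%N.
  apply/card_le1P => a _ b; rewrite !inE.
  by move: (H0 a) (H0 b) => /= /negbT/negbNE/eqP -> /negbT/negbNE/eqP ->; rewrite eqxx.
by rewrite leqNgt hn.
Qed.

Lemma deg_pos (x : T) : (0 < deg e x)%N.
Proof.
have [y hy] := exists_other x.
move: (e_conn x y) => /connectP [[|z p] /= hp hl].
  by rewrite hl eqxx in hy.
apply/card_gt0P; exists z; rewrite inE; by case/andP: hp.
Qed.

Lemma deg_le (x : T) : (deg e x <= #|T|)%N.
Proof. exact: max_card. Qed.

Lemma boundary_path (S : {set T}) p : forall x, x \in S -> path e x p ->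
  last x p \notin S -> exists x y, [/\ x \in S, y \notin S & e x y].
Proof.
elim: p => [|z p IH] x xS /=; first by rewrite xS.
move=> /andP[exz pz] hl.
case: (boolP (z \in S)) => zS; first exact: (IH z zS pz hl).
by exists x, z.
Qed.

Lemma boundary (S : {set T}) : S != set0 -> S != setT ->
  exists x y, [/\ x \in S, y \notin S & e x y].
Proof.
move=> /set0Pn [x xS] hT.
have [y yS] : exists y, y \notin S.
  case: (pickP (fun y => y \notin S)) => [y hy|H0]; first by exists y.
  move/negP: hT; case; apply/eqP/setP => z; rewrite inE.
  by move: (H0 z) => /= /negbT/negbNE.
move: (e_conn x y) => /connectP [p hp hl].
by apply: (@boundary_path S p x xS hp); rewrite -hl.
Qed.


Definition dd (x : T) : R := (deg e x)%:R.
Definition phi (S : {set T}) : R := \sum_(x in S) (dd x)^-1.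
Definition hh (S : {set T}) (x y : T) : R :=
  (e x y && (x \in S) && (y \notin S))%:R * ((dd x)^-1 * (dd y)^-1).
Definition HH (S : {set T}) := \sum_x \sum_y hh S x y.

Lemma dd_gt0 x : 0 < dd x.
Proof. by rewrite /dd ltr0n deg_pos. Qed.

Lemma Wfit_gt0 (S : {set T}) : 0 < Wfit r S.
Proof.
rewrite /Wfit.
have h1 : (0 < #|S|)%N || (0 < #|~: S|)%N.
  by rewrite -addn_gt0 cardsC (leq_trans _ hn).
case/orP: h1 => h1.
  by apply: ltr_pwDl; [rewrite mulr_gt0 // ltr0n | rewrite ler0n].
by apply: ltr_wpDl; [rewrite mulr_ge0 // ?ler0n // ltW | rewrite ltr0n].
Qed.

Lemma Wfit_le (S : {set T}) : Wfit r S <= #|T|%:R.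
Proof.
rewrite /Wfit -(cardsC S) natrD lerD2r.
rewrite -[X in _ <= X]mul1r ler_wpM2r ?ler0n //; exact: ltW.
Qed.

Lemma sum_fitness (S : {set T}) : \sum_x fitness r S x = Wfit r S.
Proof.
rewrite (bigID (fun x => x \in S)) /=.
rewrite (eq_bigr (fun _ => r)); last by move=> x xS; rewrite /fitness xS.
rewrite [X in _ + X](eq_bigr (fun _ => 1)); last by move=> x /negbTE xS; rewrite /fitness xS.
rewrite !sumr_const /Wfit mulr_natr; congr (_ + _).
rewrite -[1 *+ _]mulr_natr mul1r; congr (_%:R); apply: eq_card => z.
by rewrite !inE.
Qed.

Lemma sum_if_e x (K : R) : \sum_y (if e x y then K else 0) = K * dd x.
Proof.
rewrite -big_mkcond sumr_const -mulr_natr /dd /deg cardsE //.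
Qed.

Lemma sum_const_prob (S : {set T}) (c : R) :
  \sum_x \sum_y (if e x y then fitness r S x / Wfit r S * (dd x)^-1 * c else 0) = c.
Proof.
rewrite (eq_bigr (fun x => fitness r S x / Wfit r S * c)); last first.
  move=> x _; rewrite sum_if_e.
  have := dd_gt0 x; move: (dd x) => dx hdx.
  by rewrite mulrAC mulfVK // gt_eqF.
rewrite -mulr_suml -mulr_suml sum_fitness divff ?mul1r //.
by rewrite gt_eqF // Wfit_gt0.
Qed.


Lemma step_sum (S : {set T}) (g : {set T} -> R) :
 \sum_S' moran_step e r S S' * g S' =
 \sum_x \sum_y (if e x y then fitness r S x / Wfit r S * (dd x)^-1 *
     g (if x \in S then y |: S else S :\ y) else 0).
Proof.
rewrite /moran_step.
transitivity (\sum_(S' : {set T}) \sum_x \sum_(y | e x y)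
   (fitness r S x / Wfit r S * (dd x)^-1 *
     (S' == (if x \in S then y |: S else S :\ y))%:R * g S')).
  apply: eq_bigr => S' _; rewrite mulr_suml; apply: eq_bigr => x _.
  by rewrite mulr_suml.
rewrite exchange_big; apply: eq_bigr => x _.
rewrite exchange_big /= big_mkcond; apply: eq_bigr => y _.
case: (e x y) => //.
rewrite (bigD1 (if x \in S then y |: S else S :\ y)) //= eqxx mulr1.
rewrite big1 ?addr0 // => S' /negbTE ->; by rewrite mulr0 mul0r.
Qed.

Lemma phiU1 (S : {set T}) y : y \notin S -> phi (y |: S) = (dd y)^-1 + phi S.
Proof. by move=> yS; rewrite /phi big_setU1. Qed.

Lemma phiD1 (S : {set T}) y : y \in S -> phi S = (dd y)^-1 + phi (S :\ y).
Proof. by move=> yS; rewrite /phi (big_setD1 _ yS). Qed.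

Lemma pointwise (S : {set T}) x y :
  (if e x y then fitness r S x / Wfit r S * (dd x)^-1 *
     phi (if x \in S then y |: S else S :\ y) else 0) =
  (if e x y then fitness r S x / Wfit r S * (dd x)^-1 * phi S else 0)
  + (r * hh S x y - hh S y x) / Wfit r S.
Proof.
rewrite /hh (e_sym y x) /fitness.
case: (e x y) => /=; last by rewrite !mul0r mulr0 subr0 mul0r add0r.
case xS: (x \in S); case yS: (y \in S) => /=.
- have -> : y |: S = S by apply/setP => z; rewrite !inE; case: eqP => // ->.
  by rewrite !mul0r mulr0 subr0 mul0r addr0.
- rewrite phiU1 ?yS //.
  by rewrite mul1r mul0r subr0; ring.
- rewrite (@phiD1 S y yS).
  by rewrite mul0r mulr0 mul1r sub0r; ring.
- have -> : S :\ y = S by apply/setP => z; rewrite !inE; case: eqP => // ->; rewrite yS.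
  by rewrite !mul0r mulr0 subr0 mul0r addr0.
Qed.

Lemma sum_hh (S : {set T}) :
  \sum_x \sum_y ((r * hh S x y - hh S y x) / Wfit r S) = (r - 1) / Wfit r S * HH S.
Proof.
transitivity ((r * HH S - \sum_x \sum_y hh S y x) / Wfit r S).
  rewrite /HH mulr_sumr -sumrB mulr_suml; apply: eq_bigr => x _.
  by rewrite mulr_sumr -sumrB mulr_suml.
rewrite [\sum_x \sum_y hh S y x]exchange_big /HH /=; ring.
Qed.

Lemma step_phi (S : {set T}) :
  \sum_S' moran_step e r S S' * phi S' = phi S + (r - 1) / Wfit r S * HH S.
Proof.
rewrite step_sum -sum_hh -[in RHS](sum_const_prob S (phi S)) -big_split /=.
apply: eq_bigr => x _; rewrite -big_split; apply: eq_bigr => y _.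
exact: pointwise.
Qed.


Lemma hh_ge0 (S : {set T}) x y : 0 <= hh S x y.
Proof.
by rewrite /hh mulr_ge0 ?ler0n // mulr_ge0 // invr_ge0 ltW // dd_gt0.
Qed.

Lemma HH_ge0 (S : {set T}) : 0 <= HH S.
Proof. by apply: sumr_ge0 => x _; apply: sumr_ge0 => y _; apply: hh_ge0. Qed.

Lemma le_sum_term (I : finType) (F : I -> R) i :
  (forall j, 0 <= F j) -> F i <= \sum_j F j.
Proof.
move=> hF; rewrite (bigD1 i) //= lerDl; apply: sumr_ge0 => j _; exact: hF.
Qed.

Lemma n_gt0 : 0 < (#|T|%:R : R).
Proof. by rewrite ltr0n (leq_trans _ hn). Qed.

Lemma invdd_ge x : (#|T|%:R : R)^-1 <= (dd x)^-1.
Proof.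
rewrite lef_pV2 ?posrE ?dd_gt0 ?n_gt0 //.
by rewrite /dd ler_nat deg_le.
Qed.

Lemma HH_lb (S : {set T}) : S != set0 -> S != setT ->
  (#|T|%:R : R)^-1 ^+ 2 <= HH S.
Proof.
move=> h0 hT; have [x [y [xS yS exy]]] := @boundary S h0 hT.
apply: (le_trans _ (@le_sum_term _ (fun x => \sum_y hh S x y) x _)); last first.
  by move=> j; apply: sumr_ge0 => z _; apply: hh_ge0.
apply: (le_trans _ (@le_sum_term _ (fun y => hh S x y) y _)); last by move=> j; apply: hh_ge0.
rewrite /hh exy xS yS /= mul1r expr2.
by apply: ler_pM; rewrite ?invr_ge0 ?ler0n ?invdd_ge.
Qed.

Definition cc : R := (1 - r) / (#|T|%:R ^+ 3).

Lemma drift (S : {set T}) :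
  \sum_S' moran_step e r S S' * phi S' <=
  phi S - cc * ((S != set0) && (S != setT))%:R.
Proof.
rewrite step_phi lerD2l.
have hW := Wfit_gt0 S.
have hWi : (#|T|%:R : R)^-1 <= (Wfit r S)^-1.
  by rewrite lef_pV2 ?posrE ?n_gt0 // Wfit_le.
have hH := HH_ge0 S.
have hr : 0 < 1 - r by rewrite subr_gt0.
case: (boolP ((S != set0) && (S != setT))) => [/andP [h0 hT]|_] /=.
  have hl := @HH_lb S h0 hT.
  have hni : 0 < (#|T|%:R : R)^-1 by rewrite invr_gt0 n_gt0.
  have hab : (#|T|%:R : R)^-1 ^+ 3 <= (Wfit r S)^-1 * HH S.
    rewrite exprS; apply: ler_pM => //; rewrite ?ltW //.
    by rewrite exprn_gt0.
  rewrite /cc -exprVn mulr1.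
  have -> : (r - 1) / Wfit r S * HH S = - ((1 - r) * ((Wfit r S)^-1 * HH S)).
    by rewrite mulrA -!mulNr opprB.
  rewrite lerN2; apply: ler_wpM2l => //; exact: ltW.
rewrite mulr0 oppr0 -mulrA.
apply: mulr_le0_ge0; first by rewrite subr_le0 ltW.
by rewrite mulr_ge0 // invr_ge0 ltW.
Qed.


Lemma step_ge0 (S S' : {set T}) : 0 <= moran_step e r S S'.
Proof.
apply: sumr_ge0 => x _; apply: sumr_ge0 => y _.
rewrite mulr_ge0 ?ler0n // mulr_ge0 ?invr_ge0 ?ler0n // mulr_ge0 //.
  by rewrite /fitness; case: (x \in S); rewrite ?ler01 // ltW.
by rewrite invr_ge0 ltW // Wfit_gt0.
Qed.

Variable x0 : T.

Lemma dist_ge0 i (S : {set T}) : 0 <= moran_dist e r x0 i S.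
Proof.
elim: i S => [|i IH] S /=; first by rewrite ler0n.
by apply: sumr_ge0 => S' _; rewrite mulr_ge0 // step_ge0.
Qed.

Lemma phi_ge0 (S : {set T}) : 0 <= phi S.
Proof. by apply: sumr_ge0 => x _; rewrite invr_ge0 ltW // dd_gt0. Qed.

Definition Phi i := \sum_(S : {set T}) moran_dist e r x0 i S * phi S.

Lemma Phi_step i : Phi i.+1 <= Phi i - cc * prob_tau_gt e r x0 i.
Proof.
rewrite /Phi /=.
have -> : \sum_(S' : {set T}) (\sum_(S : {set T}) moran_dist e r x0 i S * moran_step e r S S') * phi S'
  = \sum_(S : {set T}) moran_dist e r x0 i S *
                (\sum_S' moran_step e r S S' * phi S').
  rewrite (eq_bigr (fun S' => \sum_S moran_dist e r x0 i S * moran_step e r S S' * phi S'));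
    last by move=> S' _; rewrite mulr_suml.
  rewrite exchange_big; apply: eq_bigr => S _; rewrite mulr_sumr.
  by apply: eq_bigr => S' _; rewrite mulrA.
apply: le_trans (ler_sum _ (fun S _ => ler_wpM2l (dist_ge0 i S) (drift S))) _.
rewrite le_eqVlt; apply/orP; left; apply/eqP.
rewrite /prob_tau_gt mulr_sumr [X in _ - X]big_mkcond -sumrB; apply: eq_bigr => S _.
by case: ((S != set0) && (S != setT)); rewrite /= ?mulr1 ?mulr0 ?mul0r; ring.
Qed.

Lemma tele N : cc * \sum_(i < N) prob_tau_gt e r x0 i + Phi N <= Phi 0.
Proof.
elim: N => [|N IH]; first by rewrite big_ord0 mulr0 add0r.
rewrite big_ord_recr /=; apply: le_trans IH.
have := Phi_step N; lra.
Qed.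

Lemma Phi0 : Phi 0 <= 1.
Proof.
rewrite /Phi (bigD1 [set x0]) //= eqxx mul1r big1 ?addr0; last first.
  by move=> S /negbTE ->; rewrite mul0r.
rewrite /phi big_set1 invf_le1 ?dd_gt0 //.
by rewrite /dd ler1n deg_pos.
Qed.

Lemma Phi_ge0 i : 0 <= Phi i.
Proof. by apply: sumr_ge0 => S _; rewrite mulr_ge0 ?dist_ge0 ?phi_ge0. Qed.

End Proof5.

Theorem theorem5 (R : realFieldType) (T : finType) (e : rel T)
  (e_sym : symmetric e) (e_irr : irreflexive e)
  (e_conn : forall x y : T, connect e x y)
  (hn : (2 <= #|T|)%N) (r : R) (hr0 : 0 < r) (hr1 : r < 1) (x0 : T) :
  forall N : nat,
    \sum_(i < N) prob_tau_gt e r x0 i <= (1 - r)^-1 * (#|T|%:R) ^+ 3.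
Proof.
move=> N.
have h1 := @tele R T e e_sym e_conn hn r hr0 hr1 x0 N.
have h2 := @Phi0 R T e e_conn hn r x0.
have h3 := @Phi_ge0 R T e e_conn hn r hr0 x0 N.
have hc : cc R T r * \sum_(i < N) prob_tau_gt e r x0 i <= 1 by lra.
have hr : 0 < 1 - r by rewrite subr_gt0.
have hn3 : 0 < (#|T|%:R : R) ^+ 3 by rewrite exprn_gt0 // ltr0n (leq_trans _ hn).
move: hc; rewrite /cc; move: (\sum_(i < N) _) => s.
rewrite mulrAC ler_pdivrMr // mul1r => hs.
by rewrite ler_pdivlMl.
Qed.
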